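(* Assume $|M|\ge 2$. Let $(T_{opt},B_{opt})$ be an optimal solution of an instance of MEMTCS and let $T_I$ be a minimum isotropic scattering tree for $M$. Then $(\Xi(T_I)+1)\,e_s+(|N(T_{opt})|-1)\,e_r\ \le\ 2\,\Pi(T_{opt},B_{opt})$.
   Context: Let $G=(V,E)$ be a finite, simple, undirected, connected graph with $|V|\ge 2$. Fix a positive integer $K$ and, for every $u\in V$, a nonempty set $\Gamma(u)\subseteq\{1,\dots,K\}$. For a tree $T$, $N(T)$ is its vertex set, $nb_T(u)$ the neighbours of $u$ in $T$, and $d^+(T)$ the set of vertices of degree greater than one in $T$; if $T$ is rooted, $nl(T)$ is its set of non-leaf vertices and $child(u,T)$ the set of children of $u$. A hitting set of a collection $\mathcal C$ of subsets of a finite set $\mathcal F$ is a subset of $\mathcal F$ meeting every member of $\mathcal C$. For a tree $T$ in $G$ and $u\in d^+(T)$, let $\Upsilon(u,T)$ be a minimum-cardinality hitting set of $\{\Gamma(v): v\in nb_T(u)\}$, and let $\Xi(T)=\sum_{u\in d^+(T)}|\Upsilon(u,T)|$. A minimum isotropic scattering tree $T_I$ for $M$ is a tree in $G$ with $M\subseteq N(T_I)$ minimizing $\Xi$ among all such trees. An instance of MEMTCS consists of $G,K,\Gamma$, a terminal set $M\subseteq V$, a source $s\in M$, and reals $e_s\ge e_r\ge 0$. A multicast tree is a subtree $T$ of $G$ with $M\subseteq N(T)$, rooted at $s$. A feasible schedule for $T$ is a function $B: nl(T)\to 2^{\{1,\dots,K\}}$ such that each $B(u)$ is a hitting set of $\{\Gamma(v):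 v\in child(u,T)\}$. Its cost is $\Pi(T,B)=\sum_{u\in nl(T)}|B(u)|\,e_s+(|N(T)|-1)\,e_r$. An optimal solution $(T_{opt},B_{opt})$ minimizes $\Pi$ over all pairs of a multicast tree and a feasible schedule for it. *)

(* Defs.v *)
From HB Require Import structures.
From mathcomp Require Import all_boot all_order all_algebra.
Set Implicit Arguments. Unset Strict Implicit. Unset Printing Implicit Defensive.
Import Order.TTheory GRing.Theory Num.Theory.

(* Channels {1..K} are represented by 'I_K (channel c+1 <-> ordinal c).
   A (sub)tree T of G is given by its vertex set S and its edge set
   ET : {set {set V}} (each edge an unordered pair {x,y}). *)

Section Defs.
Variables (V : finType) (e : rel V) (K : nat) (Gam : V -> {set 'I_K}).

Definition tadj (ET : {set {set V}}) : rel V :=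
  fun x y => (x != y) && ([set x; y] \in ET).

Definition is_tree (S : {set V}) (ET : {set {set V}}) : Prop :=
  [/\ (forall E, E \in ET ->
         exists x y, [/\ x != y, e x y, x \in S, y \in S & E = [set x; y]]),
      S != set0,
      (forall x y, x \in S -> y \in S -> connect (tadj ET) x y) &
      #|ET| = (#|S| - 1)%N].

Definition nbT (ET : {set {set V}}) (u : V) : {set V} := [set v | tadj ET u v].

Definition dplus (S : {set V}) (ET : {set {set V}}) : {set V} :=
  [set u in S | 1 < #|nbT ET u|].

Definition hitting (A : {set V}) (H : {set 'I_K}) : bool :=
  [forall v in A, [exists c in H, c \in Gam v]].

(* minimum cardinality of a hitting set of {Gam v : v in A}
   (= |Upsilon|; setT is always a hitting set when all Gam v are nonempty) *)
Definition min_hit (A : {set V}) : nat :=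
  #|[arg min_(H < setT | hitting A H) #|H|]|.

Definition Xi (S : {set V}) (ET : {set {set V}}) : nat :=
  (\sum_(u in dplus S ET) min_hit (nbT ET u))%N.

Definition childT (ET : {set {set V}}) (s u : V) : {set V} :=
  [set v | tadj ET u v && ~~ connect (tadj (ET :\ [set u; v])) s v].

Definition nlT (S : {set V}) (ET : {set {set V}}) (s : V) : {set V} :=
  [set u in S | childT ET s u != set0].

Definition feasible (S : {set V}) (ET : {set {set V}}) (s : V)
  (B : V -> {set 'I_K}) : Prop :=
  forall u, u \in nlT S ET s -> hitting (childT ET s u) (B u).

Definition multicast_tree (M S : {set V}) (ET : {set {set V}}) : Prop :=
  is_tree S ET /\ M \subset S.

Definition Pi (R : numDomainType) (es er : R) (S : {set V})
  (ET : {set {set V}}) (s : V) (B : V -> {set 'I_K}) : R :=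
  ((\sum_(u in nlT S ET s) (#|B u|)%:R * es) + (#|S| - 1)%:R * er)%R.

End Defs.

(* Main.v *)
Require Import Defs.
From HB Require Import structures.
From mathcomp Require Import all_boot all_order all_algebra.
Import Order.TTheory GRing.Theory Num.Theory.



Set Implicit Arguments. Unset Strict Implicit.

Lemma conn_inv (V : finType) (e : rel V) (P : pred V) x y :
  (forall a b, e a b -> P a -> P b) -> connect e x y -> P x -> P y.
Proof.
move=> HP /connectP [p Hp ->]; elim: p x Hp => //= z p IH x /andP[Hxz Hp] Px.
exact: IH Hp (HP _ _ Hxz Px).
Qed.

Lemma tadj_sym (V : finType) (E : {set {set V}}) : symmetric (tadj E).
Proof. by move=> x y; rewrite /tadj eq_sym setUC. Qed.

Lemma conn_sym (V : finType) (E : {set {set V}}) x y :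
  connect (tadj E) x y = connect (tadj E) y x.
Proof. exact: (sym_connect_sym (@tadj_sym V E)). Qed.

Lemma conn_mono (V : finType) (E1 E2 : {set {set V}}) x y :
  E1 \subset E2 -> connect (tadj E1) x y -> connect (tadj E2) x y.
Proof.
move=> sub H; apply: (@conn_inv _ _ (connect (tadj E2) x)) H _ => //.
move=> a b /andP[ab Hab] Ha; apply: connect_trans Ha (connect1 _).
by rewrite /tadj ab (subsetP sub).
Qed.

Lemma F1 (V : finType) (E : {set {set V}}) a b x y :
  connect (tadj E) x y ->
  [|| connect (tadj (E :\ [set a; b])) x y,
      connect (tadj (E :\ [set a; b])) x a |
      connect (tadj (E :\ [set a; b])) x b].
Proof.
move=> H; apply: (@conn_inv _ _ (fun z => [|| connect (tadj (E :\ [set a; b])) x z,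
      connect (tadj (E :\ [set a; b])) x a |
      connect (tadj (E :\ [set a; b])) x b])) H _; last by rewrite connect0.
move=> z w /andP[zw Hzw] /orP[Hz|->]; last by rewrite orbT.
have [Ef|Ef] := eqVneq [set z; w] [set a; b].
  have : z \in [set a; b] by rewrite -Ef set21.
  by rewrite !inE => /orP[]/eqP Hza; rewrite Hza in Hz; rewrite Hz ?orbT.
apply/orP; left; apply: connect_trans Hz (connect1 _).
by rewrite /tadj zw !inE Ef Hzw.
Qed.

Lemma conn_card (V : finType) (E : {set {set V}}) (S : {set V}) r :
  r \in S -> (forall y, y \in S -> connect (tadj E) r y) -> #|S| <= #|E| + 1.
Proof.
move=> rS Hc.
pose Q n y := [exists p : n.-tuple V, path (tadj E) r p && (last r p == y)].
have Qp p : path (tadj E) r p -> Q (size p) (last r p).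
  by move=> Hp; apply/existsP; exists (in_tuple p); rewrite /= Hp eqxx.
pose Qs y n := ~~ connect (tadj E) r y || Q n y.
have exQs y : exists n, Qs y n.
  rewrite /Qs; case: (boolP (connect (tadj E) r y)) => //=; last by exists 0.
  by case/connectP => p Hp ->; exists (size p); apply: Qp.
pose d y := ex_minn (exQs y).
have key y : y \in S -> y != r -> exists z, tadj E z y && (d z < d y).
  move=> yS yr; rewrite /d; case: ex_minnP => m; rewrite /Qs Hc //= => /existsP [p /andP[Hp /eqP Hl]] minm.
  have sz := size_tuple p.
  move: Hp Hl sz; case/lastP: (val p) => [|p' y0]; first by move=> _ /= Hl; rewrite Hl eqxx in yr.
  rewrite rcons_path last_rcons size_rcons => /andP[Hp' Hz] Hl0 Hm; subst y0.
  exists (last r p'); rewrite Hz /=.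
  case: ex_minnP => k _ mink; rewrite -Hm ltnS; apply: mink.
  by rewrite /Qs Qp ?orbT.
pose pz y := odflt y [pick z | tadj E z y && (d z < d y)].
have pzP y : y \in S -> y != r -> tadj E (pz y) y && (d (pz y) < d y).
  move=> yS yr; rewrite /pz; case: pickP => [z -> //|H].
  by case: (key y yS yr) => z; rewrite H.
pose g y := [set y; pz y].
have inj : {in S :\ r &, injective g}.
  move=> y1 y2; rewrite !inE => /andP[y1r y1S] /andP[y2r y2S] Hg.
  apply/eqP; apply/negPn/negP => ne.
  have /andP[_ d1] := pzP y1 y1S y1r.
  have /andP[_ d2] := pzP y2 y2S y2r.
  have : y1 \in g y2 by rewrite -Hg /g set21.
  rewrite !inE (negbTE ne) /= => /eqP e1.
  have : y2 \in g y1 by rewrite Hg /g set21.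
  rewrite !inE eq_sym (negbTE ne) /= => /eqP e2.
  by rewrite -e2 in d1; rewrite -e1 in d2; move: (ltn_trans d1 d2); rewrite ltnn.
have sub : [set g y | y in S :\ r] \subset E.
  apply/subsetP => _ /imsetP [y yD ->]; move: yD; rewrite !inE => /andP[yr yS].
  by have /andP[/andP[_ H] _] := pzP y yS yr; rewrite /g setUC.
have := subset_leq_card sub; rewrite card_in_imset // => H.
by rewrite (cardsD1 r S) rS addnC leq_add2r.
Qed.

Lemma tree_ends (V : finType) (e : rel V) S ET a b :
  is_tree e S ET -> [set a; b] \in ET -> a \in S /\ b \in S.
Proof.
case=> Hed _ _ _ /Hed [x [y [_ _ xS yS Eq]]].
have : a \in [set x; y] by rewrite -Eq set21.
have : b \in [set x; y] by rewrite -Eq set22.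
by rewrite !inE => /orP[]/eqP-> /orP[]/eqP->.
Qed.

Lemma bridge (V : finType) (e : rel V) S ET a b :
  is_tree e S ET -> tadj ET a b -> ~~ connect (tadj (ET :\ [set a; b])) a b.
Proof.
move=> T /andP[ab Hab]; have [aS bS] := tree_ends T Hab.
case: T => _ _ Hconn Hcard.
apply/negP => Hc.
have Hall : forall y, y \in S -> connect (tadj (ET :\ [set a; b])) a y.
  move=> y yS; rewrite conn_sym.
  case/or3P: (F1 a b (Hconn y a yS aS)) => // H.
  by apply: connect_trans H _; rewrite conn_sym.
have := conn_card aS Hall.
have S2 : 2 <= #|S|.
  have : #|[set a; b]| <= #|S|.
    by apply: subset_leq_card; apply/subsetP => z; rewrite !inE => /orP[]/eqP->.
  by rewrite cards2 ab.
move: Hcard; rewrite (cardsD1 [set a; b] ET) Hab.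
move: S2; case: #|S| => [|[|n]] //= _.
rewrite subSS subn0 add1n => <-; by rewrite addn1 ltnn.
Qed.

Lemma nonchild_uniq (V : finType) (e : rel V) S ET s u v1 v2 :
  is_tree e S ET -> tadj ET u v1 -> tadj ET u v2 ->
  connect (tadj (ET :\ [set u; v1])) s v1 ->
  connect (tadj (ET :\ [set u; v2])) s v2 -> v1 = v2.
Proof.
move=> T H1 H2 C1 C2; apply/eqP/negPn/negP => ne.
have B1 := bridge T H1; have B2 := bridge T H2.
have N1 : ~~ connect (tadj (ET :\ [set u; v1])) s u.
  apply: contra B1 => H; apply: connect_trans C1; by rewrite conn_sym.
have N2 : ~~ connect (tadj (ET :\ [set u; v2])) s u.
  apply: contra B2 => H; apply: connect_trans C2; by rewrite conn_sym.
have neq : [set u; v1] != [set u; v2].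
  apply/negP => /eqP Eq; have : v1 \in [set u; v2] by rewrite -Eq set22.
  case/andP: H1 => uv1 _; rewrite !inE eq_sym (negbTE uv1) /= => /eqP; exact/eqP.
have e12 : tadj (ET :\ [set u; v1]) v2 u.
  case/andP: H2 => uv2 Hu2; rewrite tadj_sym /tadj uv2 !inE Hu2 andbT.
  by rewrite eq_sym.
have e21 : tadj (ET :\ [set u; v2]) v1 u.
  case/andP: H1 => uv1 Hu1; rewrite tadj_sym /tadj uv1 !inE Hu1 andbT.
  by [].
case/or3P: (F1 u v1 C2) => H.
- move/negP: N1; apply; apply: connect_trans (connect1 e12).
  by apply: conn_mono H; apply: setSD; apply: subD1set.
- move/negP: N2; apply.
  by apply: conn_mono H; apply: subD1set.
- move/negP: N2; apply; apply: connect_trans (connect1 e21).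
  by apply: conn_mono H; apply: subD1set.
Qed.


Lemma mh_le (V : finType) K (Gam : V -> {set 'I_K}) A H :
  (forall v, Gam v != set0) -> hitting Gam A H -> min_hit Gam A <= #|H|.
Proof.
move=> Gne hH; rewrite /min_hit; case: arg_minnP => [|H0 _ minH]; last exact: minH.
apply/forall_inP => v _; case/set0Pn: (Gne v) => c cv; apply/exists_inP; exists c => //; by rewrite inE.
Qed.

Lemma xi_bound (V : finType) (e : rel V) K (Gam : V -> {set 'I_K})
  (Gam_ne : forall u, Gam u != set0) (M : {set V}) s (s_in : s \in M)
  (M_ge2 : 2 <= #|M|) S ET B :
  multicast_tree e M S ET -> feasible Gam S ET s B ->
  (Xi Gam S ET).+1 <= 2 * \sum_(u in nlT S ET s) #|B u|.
Proof.
case=> T MS feas.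
have sS : s \in S := subsetP MS _ s_in.
have Tc := T; case: Tc => _ _ Hconn _.
pose C u := childT ET s u.
have CsubN u : C u \subset nbT ET u.
  by apply/subsetP => v; rewrite !inE => /andP[].
have child_s v : tadj ET s v -> v \in C s.
  by move=> Hv; rewrite inE Hv /=; apply: bridge T Hv.
have nonch u v1 v2 : tadj ET u v1 -> tadj ET u v2 -> v1 \notin C u -> v2 \notin C u -> v1 = v2.
  move=> H1 H2; rewrite !inE H1 H2 /= !negbK; exact: nonchild_uniq T H1 H2.
have hitC u : u \in nlT S ET s -> hitting Gam (C u) (B u) by apply: feas.
have s_nl : s \in nlT S ET s.
  rewrite inE sS /=; apply/set0Pn.
  have : 0 < #|M :\ s| by move: M_ge2; rewrite (cardsD1 s M) s_in add1n ltnS.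
  case/card_gt0P => y; rewrite !inE => /andP[ys yM].
  have /connectP [p Hp Hl] := Hconn s y sS (subsetP MS _ yM).
  case: p Hp Hl => [|z p] /=; first by move=> _ Eq; rewrite Eq eqxx in ys.
  by case/andP => Hz _ _; exists z; apply: child_s.
have Bpos u : u \in nlT S ET s -> 0 < #|B u|.
  move=> unl; have := unl; rewrite inE => /andP[_ /set0Pn [v vC]].
  have /forall_inP /(_ v vC) /exists_inP [c cB _] := hitC u unl.
  by apply/card_gt0P; exists c.
have allC u : u \in dplus S ET -> nbT ET u \subset C u ->
    u \in nlT S ET s /\ min_hit Gam (nbT ET u) <= #|B u|.
  move=> ud sub; have unl : u \in nlT S ET s.
    move: ud; rewrite !inE => /andP[uS big]; rewrite uS /=; apply/set0Pn.
    have : 0 < #|nbT ET u| by apply: ltn_trans big.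
    by case/card_gt0P => v vN; exists v; apply: (subsetP sub).
  split => //; apply: mh_le => //; apply/forall_inP => v vN.
  by move/forall_inP: (hitC u unl) => /(_ v (subsetP sub _ vN)).
have hdp u : u \in dplus S ET ->
    u \in nlT S ET s /\ min_hit Gam (nbT ET u) <= #|B u| + (u != s).
  move=> ud; have [us|us] := eqVneq u s.
    subst u; have [] := allC s ud; last by move=> -> H; rewrite addn0.
    by apply/subsetP => v; rewrite inE => /child_s.
  case: (pickP [pred v | (v \in nbT ET u) && (v \notin C u)]) => [p /andP[pN pC]|none]; last first.
    have [] := allC u ud; last by move=> ? H; split=> //; apply: leq_trans H (leq_addr _ _).
    apply/subsetP => v vN; move: (none v) => /=; rewrite vN /=; exact: negbFE.
  have unl : u \in nlT S ET s.
    move: ud; rewrite !inE => /andP[uS big]; rewrite uS /=; apply/set0Pn.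
    have : 0 < #|nbT ET u :\ p|.
      by move: big; rewrite (cardsD1 p) pN add1n ltnS.
    case/card_gt0P => v; rewrite !inE => /andP[vp vN].
    exists v; apply/negPn/negP => vC; move/eqP: vp; apply.
    by apply: (nonch u v p) => //; rewrite inE in pN.
  split => //.
  case/set0Pn: (Gam_ne p) => c cp.
  apply: (@leq_trans #|c |: B u|).
    apply: mh_le => //; apply/forall_inP => v vN.
    case: (boolP (v \in C u)) => vC.
      move/forall_inP: (hitC u unl) => /(_ v vC) /exists_inP [c' c'B c'v].
      by apply/exists_inP; exists c' => //; rewrite inE c'B orbT.
    have vp : v = p by apply: (nonch u v p _ _ vC pC); [move: vN | move: pN]; rewrite inE.
    by apply/exists_inP; exists c; rewrite ?inE ?eqxx // vp.
  by rewrite cardsU1 addnC leq_add2l leq_b1.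
have h1 : Xi Gam S ET <= \sum_(u in nlT S ET s) (#|B u| + (u != s)).
  apply: (@leq_trans (\sum_(u in dplus S ET) (#|B u| + (u != s)))).
    by apply: leq_sum => u ud; case: (hdp u ud).
  apply: (@sub_le_big _ addn leq leqnn (fun x y => leq_addr y x)) => u ud.
  by case: (hdp u ud).
have h2 : \sum_(u in nlT S ET s) (u != s) < \sum_(u in nlT S ET s) #|B u|.
  apply: (@leq_trans (\sum_(u in nlT S ET s) ((u != s) + (u == s)))).
    by rewrite big_split /= [X in _ < _ + X](bigD1 s s_nl) /= eqxx -[X in X < _]addn0 ltn_add2l.
  apply: leq_sum => u unl; have := Bpos u unl.
  by case: (u == s).
rewrite big_split /= in h1.
by rewrite mul2n -addnn; apply: leq_ltn_trans h1 _; rewrite ltn_add2l.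
Qed.

Local Open Scope ring_scope.

Theorem mainTheorem13
  (R : realFieldType) (V : finType) (e : rel V)
  (e_sym : symmetric e) (e_irr : irreflexive e)
  (G_conn : forall x y : V, connect e x y) (V_ge2 : (2 <= #|V|)%N)
  (K : nat) (K_pos : (0 < K)%N) (Gam : V -> {set 'I_K})
  (Gam_ne : forall u, Gam u != set0)
  (M : {set V}) (s : V) (s_in : s \in M) (M_ge2 : (2 <= #|M|)%N)
  (es er : R) (er_ge0 : 0 <= er) (er_le_es : er <= es)
  (* optimal solution (T_opt, B_opt) *)
  (Sopt : {set V}) (ETopt : {set {set V}}) (Bopt : V -> {set 'I_K})
  (opt_tree : multicast_tree e M Sopt ETopt)
  (opt_feas : feasible Gam Sopt ETopt s Bopt)
  (opt_min : forall (S : {set V}) (ET : {set {set V}}) (B : V -> {set 'I_K}),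
      multicast_tree e M S ET -> feasible Gam S ET s B ->
      Pi es er Sopt ETopt s Bopt <= Pi es er S ET s B)
  (* minimum isotropic scattering tree T_I for M *)
  (SI : {set V}) (ETI : {set {set V}})
  (TI_tree : is_tree e SI ETI) (TI_M : M \subset SI)
  (TI_min : forall (S : {set V}) (ET : {set {set V}}),
      is_tree e S ET -> M \subset S -> (Xi Gam SI ETI <= Xi Gam S ET)%N) :
  ((Xi Gam SI ETI).+1)%:R * es + (#|Sopt| - 1)%:R * er
    <= 2%:R * Pi es er Sopt ETopt s Bopt.
Proof.
have es0 : 0 <= es := le_trans er_ge0 er_le_es.
have hx := xi_bound Gam_ne s_in M_ge2 opt_tree opt_feas.
have hI := TI_min _ _ (proj1 opt_tree) (proj2 opt_tree).
set b := (\sum_(u in nlT Sopt ETopt s) #|Bopt u|)%N in hx.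
have Eb : \sum_(u in nlT Sopt ETopt s) (#|Bopt u|)%:R * es = b%:R * es.
  by rewrite /b natr_sum mulr_suml.
rewrite /Pi Eb mulrDr; apply: lerD.
  rewrite mulrA -natrM; apply: ler_wpM2r => //; rewrite ler_nat.
  exact: leq_ltn_trans hI hx.
apply: ler_peMl; last by rewrite ler1n.
by apply: mulr_ge0.
Qed.
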